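(* Let $\tau$ be a signature, $\mathcal F$ an ultrafilter on $I$, $\mathcal G$ an ultrafilter on $J$, $\{\mathcal A_{i,j}:i\in I,j\in J\}$ a family of $\tau$-structures, and $\phi\in SO(\tau)$. For $j\in J$ let $(\mathcal A_j,\Upsilon_j)$ be the decomposable-Henkin model formed from $\{\mathcal A_{i,j}:i\in I\}$ by $\mathcal F$, and let $(\mathcal A,\Upsilon)$ be the decomposable-Henkin model formed from $\{\mathcal A_{i,j}:(i,j)\in I\times J\}$ by $\mathcal F\times\mathcal G$. Then $\{j\in J:(\mathcal A_j,\Upsilon_j)\models_\epsilon\phi\}\in\mathcal G$ if and only if $(\mathcal A,\Upsilon)\models_\epsilon\phi$.
   Context: $SO(\tau)$: second-order $\tau$-formulas with relation variables only. For ultrafilters $\mathcal F$ on $I$, $\mathcal G$ on $J$, the product $\mathcal F\times\mathcal G$ on $I\times J$ is given by $X\in\mathcal F\times\mathcal G$ iff $\{j:\{i:(i,j)\in X\}\in\mathcal F\}\in\mathcal G$. Given a family $\{\mathcal B_k:k\in L\}$ of $\tau$-structures and an ultrafilter $\mathcal H$ on $L$, with $\mathcal B=\prod_k\mathcal B_k/\mathcal H$, a relation $R\subseteq B^m$ ($m\geq1$) is decomposable if $R=\prod_k R_k/\mathcal H$ for some $R_k\subseteq B_k^m$; the decomposable-Henkin model formed from the family by $\mathcal H$ is the pair $(\mathcal B,\Upsilon)$ where $\Upsilon$ is the set of all decomposable relations. Henkin semantics $\models_\epsilon$: formulas are evaluated in $(\mathcal B,\Upsilon)$ under assignments sending each $m$-ary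 relation variable to an $m$-ary relation in $\Upsilon$ (and first-order variables to elements of $B$); first-order parts are evaluated in the expansion of $\mathcal B$ by the assigned relations as usual, and second-order quantifiers $\exists R$, $\forall R$ range only over the relations in $\Upsilon$ of the appropriate arity. $(\mathcal B,\Upsilon)\models_\epsilon\phi$ means $\phi$ holds under all assignments. *)

(* Defs.v *)
From Stdlib Require Import ClassicalEpsilon.
From mathcomp Require Import ssreflect ssrfun ssrbool eqtype ssrnat fintype.

Set Implicit Arguments.
Unset Strict Implicit.
Unset Printing Implicit Defensive.

Definition ultrafilter (I : Type) (U : (I -> Prop) -> Prop) : Prop :=
  [/\ U (fun _ => True),
      ~ U (fun _ => False),
      (forall X Y : I -> Prop, U X -> (forall i, X i -> Y i) -> U Y),
      (forall X Y : I -> Prop, U X -> U Y -> U (fun i => X i /\ Y i))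
    & (forall X : I -> Prop, U X \/ U (fun i => ~ X i))].

Definition prod_uf (I J : Type) (F : (I -> Prop) -> Prop) (G : (J -> Prop) -> Prop)
  : (I * J -> Prop) -> Prop :=
  fun X => G (fun j => F (fun i => X (i, j))).

Record signature := Signature {
  rel_sym : Type;
  rel_ar : rel_sym -> nat;
  fun_sym : Type;            (* constants are 0-ary function symbols *)
  fun_ar : fun_sym -> nat }.

Record structure (tau : signature) := Structure {
  carrier :> Type;
  dom_ne : inhabited carrier;
  interp_fun : forall f : fun_sym tau, ('I_(fun_ar f) -> carrier) -> carrier;
  interp_rel : forall r : rel_sym tau, ('I_(rel_ar r) -> carrier) -> Prop }.

(* ---------- Second-order formulas SO(tau), relation variables only ---------- *)

Inductive term (tau : signature) : Type :=
| tvar : nat -> term tau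
| tapp : forall f : fun_sym tau, ('I_(fun_ar f) -> term tau) -> term tau.

(* A relation variable is a pair (m, X) and has arity m.+1 (>= 1). *)
Inductive formula (tau : signature) : Type :=
| fEq : term tau -> term tau -> formula tau
| fRel : forall r : rel_sym tau, ('I_(rel_ar r) -> term tau) -> formula tau
| fRVar : forall m X : nat, ('I_m.+1 -> term tau) -> formula tau
| fFalse : formula tau
| fNot : formula tau -> formula tau
| fAnd : formula tau -> formula tau -> formula tau
| fOr : formula tau -> formula tau -> formula tau
| fImp : formula tau -> formula tau -> formula tau
| fEx : nat -> formula tau -> formula tau
| fAll : nat -> formula tau -> formula tau
| fEx2 : nat -> nat -> formula tau -> formula tau
| fAll2 : nat -> nat -> formula tau -> formula tau.

Section Semantics.
Variable tau : signature.
Variable M : structure tau.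

Definition rel_of (m : nat) := ('I_m.+1 -> M) -> Prop.
Definition fo_asg := nat -> M.
Definition so_asg := forall m : nat, nat -> rel_of m.

Fixpoint teval (s : fo_asg) (t : term tau) : M :=
  match t with
  | tvar x => s x
  | tapp f args => @interp_fun tau M f (fun i => teval s (args i))
  end.

Definition upd1 (s : fo_asg) (x : nat) (a : M) : fo_asg :=
  fun y => if Nat.eqb y x then a else s y.

Definition upd2 (S : so_asg) (m X : nat) (R : rel_of m) : so_asg :=
  fun m' => match PeanoNat.Nat.eq_dec m m' with
            | left e => fun X' => if Nat.eqb X' X
                                  then eq_rect m rel_of R m' e else S m' X'
            | right _ => S m'
            end.

Variable Upsilon : forall m : nat, rel_of m -> Prop.

Fixpoint hsat (s : fo_asg) (S : so_asg) (phi : formula tau) : Prop :=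
  match phi with
  | fEq t1 t2 => teval s t1 = teval s t2
  | fRel r args => @interp_rel tau M r (fun i => teval s (args i))
  | fRVar m X args => S m X (fun i => teval s (args i))
  | fFalse => False
  | fNot p => ~ hsat s S p
  | fAnd p q => hsat s S p /\ hsat s S q
  | fOr p q => hsat s S p \/ hsat s S q
  | fImp p q => hsat s S p -> hsat s S q
  | fEx x p => exists a : M, hsat (upd1 s x a) S p
  | fAll x p => forall a : M, hsat (upd1 s x a) S p
  | fEx2 m X p => exists R : rel_of m, Upsilon R /\ hsat s (upd2 S X R) p
  | fAll2 m X p => forall R : rel_of m, Upsilon R -> hsat s (upd2 S X R) p
  end.

Definition hmodels (phi : formula tau) : Prop :=
  forall (s : fo_asg) (S : so_asg), (forall m X, Upsilon (S m X)) -> hsat s S phi.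

End Semantics.

Section Ultraproduct.
Variables (tau : signature) (L : Type) (H : (L -> Prop) -> Prop)
          (B : L -> structure tau).

Definition uclass (f : forall k, B k) : (forall k, B k) -> Prop :=
  fun g => H (fun k => f k = g k).

(* elements of prod_k B_k / H are the equivalence classes *)
Definition up_car := {c : (forall k, B k) -> Prop | exists f, c = uclass f}.

Definition uinj (f : forall k, B k) : up_car :=
  exist _ (uclass f) (ex_intro _ f erefl).

Definition urep (c : up_car) : forall k, B k :=
  proj1_sig (constructive_indefinite_description _ (proj2_sig c)).

Definition up_point : forall k, B k :=
  fun k => epsilon (dom_ne (B k)) (fun _ => True).

Definition ultraproduct : structure tau :=
  {| carrier := up_car;
     dom_ne := inhabits (uinj up_point);
     interp_fun := fun f c => uinj (fun k => @interp_fun tau (B k) f (fun i => urep (c i) k));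
     interp_rel := fun r c => H (fun k => @interp_rel tau (B k) r (fun i => urep (c i) k)) |}.

Definition prod_rel (n : nat) (Rk : forall k, ('I_n -> B k) -> Prop)
  : ('I_n -> ultraproduct) -> Prop :=
  fun c => H (fun k => Rk k (fun i => urep (c i) k)).

Definition decomposable (m : nat) (R : rel_of ultraproduct m) : Prop :=
  exists Rk : forall k, ('I_m.+1 -> B k) -> Prop, R = prod_rel Rk.

End Ultraproduct.

Arguments decomposable {tau L} H B m R.
Arguments hmodels {tau} M Upsilon phi.
Arguments ultraproduct {tau L} H B.

Definition dh_models (tau : signature) (L : Type) (H : (L -> Prop) -> Prop)
  (B : L -> structure tau) (phi : formula tau) : Prop :=
  hmodels (ultraproduct H B) (decomposable H B) phi.

(* Main.v *)
Require Import Defs.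
From Stdlib Require Import Setoid ClassicalEpsilon Classical FunctionalExtensionality PropExtensionality ProofIrrelevance.
From mathcomp Require Import ssreflect ssrfun ssrbool eqtype ssrnat fintype.

Set Implicit Arguments.
Unset Strict Implicit.
Unset Printing Implicit Defensive.

Lemma uf_mono (L : Type) (U : (L -> Prop) -> Prop) (hU : ultrafilter U) (X Y : L -> Prop) :
  U X -> (forall i, X i -> Y i) -> U Y.
Proof. by case: hU => _ _ h _ _; apply: h. Qed.

Lemma uf_true (L : Type) (U : (L -> Prop) -> Prop) (hU : ultrafilter U) : U (fun _ => True).
Proof. by case: hU. Qed.

Lemma uf_and (L : Type) (U : (L -> Prop) -> Prop) (hU : ultrafilter U) (X Y : L -> Prop) :
  U (fun i => X i /\ Y i) <-> U X /\ U Y.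
Proof.
split.
- by move=> h; split; apply: (uf_mono hU h) => i [].
- by have [_ _ _ h _] := hU; case; apply: h.
Qed.

Lemma uf_congr (L : Type) (U : (L -> Prop) -> Prop) (hU : ultrafilter U) (X Y : L -> Prop) :
  (forall i, X i <-> Y i) -> (U X <-> U Y).
Proof. by move=> h; split=> hx; apply: (uf_mono hU hx) => i /h. Qed.

Lemma uf_false (L : Type) (U : (L -> Prop) -> Prop) (hU : ultrafilter U) (X : L -> Prop) :
  (forall i, ~ X i) -> ~ U X.
Proof. move=> h hx; have [_ hf _ _ _] := hU; apply: hf; exact: (uf_mono hU hx). Qed.

Lemma uf_not (L : Type) (U : (L -> Prop) -> Prop) (hU : ultrafilter U) (X : L -> Prop) :
  U (fun i => ~ X i) <-> ~ U X.
Proof.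
split.
- move=> h1 h2. have := proj2 (uf_and hU _ _) (conj h1 h2).
  by apply: (uf_false hU) => i [].
- by case: hU => _ _ _ _ /(_ X) [].
Qed.

Lemma uf_or (L : Type) (U : (L -> Prop) -> Prop) (hU : ultrafilter U) (X Y : L -> Prop) :
  U (fun i => X i \/ Y i) <-> U X \/ U Y.
Proof.
split.
- move=> h; apply: NNPP => hn.
  have h1 : U (fun i => ~ X i) by apply/uf_not => //; move=> hx; apply: hn; left.
  have h2 : U (fun i => ~ Y i) by apply/uf_not => //; move=> hx; apply: hn; right.
  have := proj2 (uf_and hU _ _) (conj h (proj2 (uf_and hU _ _) (conj h1 h2))).
  by apply: (uf_false hU) => i [[]] ? [].
- by case=> h; apply: (uf_mono hU h) => i; [left|right].
Qed.

Lemma uf_imp (L : Type) (U : (L -> Prop) -> Prop) (hU : ultrafilter U) (X Y : L -> Prop) :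
  U (fun i => X i -> Y i) <-> (U X -> U Y).
Proof.
split.
- move=> h hx; have := proj2 (uf_and hU _ _) (conj h hx).
  by move/(uf_mono hU); apply => i [f /f].
- move=> h; case: (classic (U X)) => hx.
  + by apply: (uf_mono hU (h hx)).
  + by move/(uf_not hU): hx => hx; apply: (uf_mono hU hx).
Qed.

Lemma uf_fin (L : Type) (U : (L -> Prop) -> Prop) (hU : ultrafilter U) n (Q : 'I_n -> L -> Prop) :
  (forall i, U (Q i)) -> U (fun l => forall i, Q i l).
Proof.
move=> hQ.
suff: forall k, k <= n -> U (fun l => forall i : 'I_n, i < k -> Q i l).
  move/(_ n (leqnn n)) => h; apply: (uf_mono hU h) => l hl i; exact: hl.
elim=> [|k IH] hk.
- by apply: (uf_mono hU (uf_true hU)) => l _ i.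
- have hk' : k < n by [].
  have := proj2 (uf_and hU _ _) (conj (IH (ltnW hk)) (hQ (Ordinal hk'))).
  move/(uf_mono hU); apply=> l [h1 h2] i; rewrite ltnS leq_eqVlt => /orP [/eqP e|lt].
  + by have -> : i = Ordinal hk' by apply: val_inj.
  + exact: h1.
Qed.

Lemma prod_uf_uf I J (F : (I -> Prop) -> Prop) (G : (J -> Prop) -> Prop)
  (hF : ultrafilter F) (hG : ultrafilter G) : ultrafilter (prod_uf F G).
Proof.
rewrite /prod_uf; split.
- by apply: (uf_mono hG (uf_true hG)) => j _; apply: uf_true.
- by apply: (uf_false hG) => j /=; apply: (uf_false hF) => i [].
- move=> X Y hX hXY; apply: (uf_mono hG hX) => j h; apply: (uf_mono hF h) => i; exact: hXY.
- move=> X Y hX hY; have := proj2 (uf_and hG _ _) (conj hX hY).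
  by move/(uf_mono hG); apply=> j /(uf_and hF).
- move=> X; apply/(uf_or hG); apply: (uf_mono hG (uf_true hG)) => j _.
  case: (classic (F (fun i => X (i, j)))) => h; [by left|right].
  by move/(uf_not hF): h.
Qed.

Lemma up_eq tau L (H : (L -> Prop) -> Prop) (B : L -> structure tau) (c1 c2 : up_car H B) :
  proj1_sig c1 = proj1_sig c2 -> c1 = c2.
Proof. case: c1 c2 => [x1 p1] [x2 p2] /= e; subst x2; f_equal; apply: proof_irrelevance. Qed.

Lemma uinj_eq tau L (H : (L -> Prop) -> Prop) (hH : ultrafilter H) (B : L -> structure tau)
  (f g : forall k, B k) : uinj H f = uinj H g <-> H (fun k => f k = g k).
Proof.
split.
- move=> e. have : uclass H f f.
    by rewrite /uclass; apply: (uf_mono hH (uf_true hH)).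
  have -> : uclass H f = uclass H g by move: e => /(f_equal (@proj1_sig _ _)).
  by rewrite /uclass => h; apply: (uf_mono hH h) => k ->.
- move=> h; apply: up_eq => /=; apply: functional_extensionality => x.
  apply: propositional_extensionality; rewrite /uclass; split=> h2.
  + have := proj2 (uf_and hH _ _) (conj h h2).
    by move/(uf_mono hH); apply => k [-> ->].
  + have := proj2 (uf_and hH _ _) (conj h h2).
    by move/(uf_mono hH); apply => k [-> ->].
Qed.

Lemma uinj_urep tau L (H : (L -> Prop) -> Prop) (B : L -> structure tau) (c : up_car H B) :
  uinj H (urep c) = c.
Proof.
apply: up_eq => /=; rewrite /urep.
case: (constructive_indefinite_description _ _) => f e /=. by rewrite e.
Qed.

Lemma urep_uinj tau L (H : (L -> Prop) -> Prop) (hH : ultrafilter H) (B : L -> structure tau)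
  (f : forall k, B k) : H (fun k => urep (uinj H f) k = f k).
Proof. by apply/(uinj_eq hH); rewrite uinj_urep. Qed.

Lemma transfer tau L (H : (L -> Prop) -> Prop) (hH : ultrafilter H) (B : L -> structure tau)
  n (c : 'I_n -> up_car H B) (g : 'I_n -> forall k, B k) :
  (forall i, c i = uinj H (g i)) ->
  forall Q : forall k, ('I_n -> B k) -> Prop,
  H (fun k => Q k (fun i => urep (c i) k)) <-> H (fun k => Q k (fun i => g i k)).
Proof.
move=> hc Q.
have hall : H (fun k => forall i, urep (c i) k = g i k).
  apply: (uf_fin hH) => i; rewrite hc; exact: urep_uinj.
split=> h; have := proj2 (uf_and hH _ _) (conj h hall); move/(uf_mono hH); apply=> k [hq he].
- by have <- : (fun i => urep (c i) k) = (fun i => g i k) by apply: functional_extensionality.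
- by have -> : (fun i => urep (c i) k) = (fun i => g i k) by apply: functional_extensionality.
Qed.

Lemma teval_uinj tau L (H : (L -> Prop) -> Prop) (hH : ultrafilter H) (B : L -> structure tau)
  (sg : nat -> forall k, B k) (s : fo_asg (ultraproduct H B)) :
  (forall x, s x = uinj H (sg x)) ->
  forall t, teval s t = uinj H (fun k => teval (M := B k) (fun x => sg x k) t).
Proof.
move=> hs; elim=> [x|f args IH] /=; first exact: hs.
apply/(uinj_eq hH).
have := proj2 (transfer hH IH (fun k tup => @interp_fun tau (B k) f tup =
   @interp_fun tau (B k) f (fun i => teval (M := B k) (fun x => sg x k) (args i)))).
apply; by apply: (uf_mono hH (uf_true hH)).
Qed.


Definition rupd tau L (B : L -> structure tau)
  (rh : forall m, nat -> forall k, ('I_m.+1 -> B k) -> Prop) m X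
  (Rk : forall k, ('I_m.+1 -> B k) -> Prop) : forall m', nat -> forall k, ('I_m'.+1 -> B k) -> Prop :=
  fun m' => match PeanoNat.Nat.eq_dec m m' with
  | left e => fun X' => if Nat.eqb X' X
              then eq_rect m (fun n => forall k, ('I_n.+1 -> B k) -> Prop) Rk m' e
              else rh m' X'
  | right _ => rh m'
  end.

Lemma upd2_prod tau L (H : (L -> Prop) -> Prop) (B : L -> structure tau)
  (S : so_asg (ultraproduct H B)) (rh : forall m, nat -> forall k, ('I_m.+1 -> B k) -> Prop)
  m X (Rk : forall k, ('I_m.+1 -> B k) -> Prop) :
  (forall m X, S m X = prod_rel (rh m X)) ->
  forall m' X', @upd2 _ _ S m X (prod_rel Rk) m' X' = prod_rel (@rupd _ _ _ rh m X Rk m' X').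
Proof.
move=> hS m' X'; rewrite /upd2 /rupd.
case: (PeanoNat.Nat.eq_dec m m') => [e|ne]; last exact: hS.
destruct e => /=; case: (Nat.eqb X' X) => //; exact: hS.
Qed.

Lemma rupd_restr tau I J (A : I -> J -> structure tau)
  (rh : forall m, nat -> forall p : I * J, ('I_m.+1 -> A p.1 p.2) -> Prop)
  m X (Rk : forall p : I * J, ('I_m.+1 -> A p.1 p.2) -> Prop) j m' X' :
  @rupd _ _ (fun i => A i j) (fun m X i => rh m X (i, j)) m X (fun i => Rk (i, j)) m' X'
  = fun i => @rupd _ _ _ rh m X Rk m' X' (i, j).
Proof.
rewrite /rupd; case: (PeanoNat.Nat.eq_dec m m') => [e|ne] //.
destruct e => /=; by case: (Nat.eqb X' X).
Qed.

Lemma los tau I J (F : (I -> Prop) -> Prop) (G : (J -> Prop) -> Prop)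
  (hF : ultrafilter F) (hG : ultrafilter G)
  (A : I -> J -> structure tau) (phi : formula tau) :
 forall (sg : nat -> forall p : I * J, A p.1 p.2)
   (rh : forall m, nat -> forall p : I * J, ('I_m.+1 -> A p.1 p.2) -> Prop)
   (s : fo_asg (ultraproduct (prod_uf F G) (fun p : I * J => A p.1 p.2)))
   (S : so_asg (ultraproduct (prod_uf F G) (fun p : I * J => A p.1 p.2)))
   (sj : forall j, fo_asg (ultraproduct F (fun i => A i j)))
   (Sj : forall j, so_asg (ultraproduct F (fun i => A i j))),
 (forall x, s x = uinj (prod_uf F G) (sg x)) ->
 (forall m X, S m X = prod_rel (rh m X)) ->
 (forall j x, sj j x = uinj F (fun i => sg x (i, j))) ->
 (forall j m X, Sj j m X = prod_rel (fun i => rh m X (i, j))) ->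
 (hsat (decomposable (prod_uf F G) (fun p : I * J => A p.1 p.2)) s S phi <->
  G (fun j => hsat (decomposable F (fun i => A i j)) (sj j) (Sj j) phi)).
Proof.
have hP := prod_uf_uf hF hG.
elim: phi => [t1 t2|r args|m X args||p IHp|p IHp q IHq|p IHp q IHq|p IHp q IHq
  |x p IHp|x p IHp|m X p IHp|m X p IHp] sg rh s S sj Sj hs hS hsj hSj /=.
- rewrite !(teval_uinj hP hs) (uinj_eq hP) /prod_uf; apply: (uf_congr hG) => j /=.
  by rewrite !(teval_uinj hF (hsj j)) (uinj_eq hF).
- have hc := fun a => teval_uinj hP hs (args a).
  apply: iff_trans; first exact: (transfer hP hc (fun k tup => @interp_rel _ _ r tup)).
  rewrite /prod_uf; apply: (uf_congr hG) => j /=.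
  have hcj := fun a => teval_uinj hF (hsj j) (args a).
  symmetry; exact: (transfer hF hcj (fun k tup => @interp_rel _ _ r tup)).
- have hc := fun a => teval_uinj hP hs (args a).
  rewrite hS /prod_rel.
  apply: iff_trans; first exact: (transfer hP hc (fun k tup => rh m X k tup)).
  rewrite /prod_uf; apply: (uf_congr hG) => j /=.
  have hcj := fun a => teval_uinj hF (hsj j) (args a).
  rewrite hSj /prod_rel.
  symmetry; exact: (transfer hF hcj (fun k tup => rh m X (k, j) tup)).
- by split=> //; apply: (uf_false hG) => j [].
- rewrite (IHp sg rh s S sj Sj hs hS hsj hSj); symmetry; exact: (uf_not hG).
- rewrite (IHp sg rh s S sj Sj hs hS hsj hSj) (IHq sg rh s S sj Sj hs hS hsj hSj).
  symmetry; exact: (uf_and hG).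
- rewrite (IHp sg rh s S sj Sj hs hS hsj hSj) (IHq sg rh s S sj Sj hs hS hsj hSj).
  symmetry; exact: (uf_or hG).
- rewrite (IHp sg rh s S sj Sj hs hS hsj hSj) (IHq sg rh s S sj Sj hs hS hsj hSj).
  symmetry; exact: (uf_imp hG).
- have compat : forall (a : up_car (prod_uf F G) (fun q : I * J => A q.1 q.2))
      (b : forall j, up_car F (A^~ j)) (tt : forall q : I * J, A q.1 q.2),
      a = uinj (prod_uf F G) tt -> (forall j, b j = uinj F (fun i => tt (i, j))) ->
      (hsat (decomposable (prod_uf F G) (fun q : I * J => A q.1 q.2)) (upd1 s x a) S p <->
       G (fun j => hsat (decomposable F (A^~ j)) (upd1 (sj j) x (b j)) (Sj j) p)).
    move=> a b tt ha hb; apply: (IHp (fun y => if Nat.eqb y x then tt else sg y) rh) => //.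
    - by move=> y; rewrite /upd1; case: (Nat.eqb y x); [exact: ha | exact: hs].
    - by move=> j y; rewrite /upd1; case: (Nat.eqb y x); [exact: hb | exact: hsj].
  split.
  + case=> a ha.
    have := proj1 (compat a (fun j => uinj F (fun i => urep a (i, j))) (urep a) (esym (uinj_urep a)) (fun j => erefl)) ha.
    by move/(uf_mono hG); apply=> j h; eexists; exact: h.
  + move=> h.
    have hex : forall j, exists b : up_car F (A^~ j),
        (exists b', hsat (decomposable F (A^~ j)) (upd1 (sj j) x b') (Sj j) p) -> hsat (decomposable F (A^~ j)) (upd1 (sj j) x b) (Sj j) p.
      move=> j; case: (classic (exists b' : up_car F (A^~ j), hsat (decomposable F (A^~ j)) (upd1 (sj j) x b') (Sj j) p)) => [[b' hb']|hn].
      * by exists b'.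
      * by exists (sj j x).
    pose b := fun j => proj1_sig (constructive_indefinite_description _ (hex j)).
    have hb := fun j => proj2_sig (constructive_indefinite_description _ (hex j)).
    exists (uinj (prod_uf F G) (fun q : I * J => urep (b q.2) q.1)).
    apply/(compat _ b (fun q : I * J => urep (b q.2) q.1) erefl (fun j => esym (uinj_urep (b j)))).
    by apply: (uf_mono hG h) => j /hb.
- have compat : forall (a : up_car (prod_uf F G) (fun q : I * J => A q.1 q.2))
      (b : forall j, up_car F (A^~ j)) (tt : forall q : I * J, A q.1 q.2),
      a = uinj (prod_uf F G) tt -> (forall j, b j = uinj F (fun i => tt (i, j))) ->
      (hsat (decomposable (prod_uf F G) (fun q : I * J => A q.1 q.2)) (upd1 s x a) S p <->
       G (fun j => hsat (decomposable F (A^~ j)) (upd1 (sj j) x (b j)) (Sj j) p)).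
    move=> a b tt ha hb; apply: (IHp (fun y => if Nat.eqb y x then tt else sg y) rh) => //.
    - by move=> y; rewrite /upd1; case: (Nat.eqb y x); [exact: ha | exact: hs].
    - by move=> j y; rewrite /upd1; case: (Nat.eqb y x); [exact: hb | exact: hsj].
  split.
  + move=> h; apply: NNPP => hn; move/(uf_not hG): hn => hn.
    have hex : forall j, exists b : up_car F (A^~ j),
        (~ forall b', hsat (decomposable F (A^~ j)) (upd1 (sj j) x b') (Sj j) p) -> ~ hsat (decomposable F (A^~ j)) (upd1 (sj j) x b) (Sj j) p.
      move=> j; case: (classic (forall b' : up_car F (A^~ j), hsat (decomposable F (A^~ j)) (upd1 (sj j) x b') (Sj j) p)) => [hall|hn'].
      * by exists (sj j x).
      * have [b' hb'] := not_all_ex_not _ _ hn'. by exists b'.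
    pose b := fun j => proj1_sig (constructive_indefinite_description _ (hex j)).
    have hb := fun j => proj2_sig (constructive_indefinite_description _ (hex j)).
    have := proj1 (compat _ b (fun q : I * J => urep (b q.2) q.1) erefl (fun j => esym (uinj_urep (b j))))
      (h (uinj (prod_uf F G) (fun q : I * J => urep (b q.2) q.1))).
    move=> h2; have := proj2 (uf_and hG _ _) (conj h2 hn).
    by apply: (uf_false hG) => j [h3 h4]; apply: (hb j h4).
  + move=> h a.
    apply/(compat a (fun j => uinj F (fun i => urep a (i, j))) (urep a) (esym (uinj_urep a)) (fun j => erefl)).
    by apply: (uf_mono hG h) => j; apply.
- have compat2 : forall Rk : forall q : I * J, ('I_m.+1 -> A q.1 q.2) -> Prop,
      hsat (decomposable (prod_uf F G) (fun q : I * J => A q.1 q.2)) s (upd2 S X (prod_rel Rk)) p <->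
      G (fun j => hsat (decomposable F (A^~ j)) (sj j) (upd2 (Sj j) X (prod_rel (fun i => Rk (i, j)))) p).
    move=> Rk; apply: (IHp sg (@rupd _ _ _ rh m X Rk)) => //.
    - move=> m' X'; exact: upd2_prod.
    - move=> j m' X'.
      by rewrite (@upd2_prod _ _ _ _ (Sj j) (fun m X i => rh m X (i, j)) m X (fun i => Rk (i, j)) (hSj j)) rupd_restr.
  split.
  + case=> R [[Rk ->] hR]; have := proj1 (compat2 Rk) hR.
    move/(uf_mono hG); apply=> j h; exists (prod_rel (fun i => Rk (i, j))); split => //.
    by exists (fun i => Rk (i, j)).
  + move=> h.
    have hex : forall j, exists Rkj : forall i, ('I_m.+1 -> A i j) -> Prop,
        (exists R, decomposable F (A^~ j) m R /\ hsat (decomposable F (A^~ j)) (sj j) (upd2 (Sj j) X R) p) ->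
        hsat (decomposable F (A^~ j)) (sj j) (upd2 (Sj j) X (prod_rel Rkj)) p.
      move=> j; case: (classic (exists R, decomposable F (A^~ j) m R /\ hsat (decomposable F (A^~ j)) (sj j) (upd2 (Sj j) X R) p)) => [[R [[Rk e] hR]]|hn].
      * by subst R; exists Rk.
      * by exists (fun _ _ => True).
    pose Rkj := fun j => proj1_sig (constructive_indefinite_description _ (hex j)).
    have hb := fun j => proj2_sig (constructive_indefinite_description _ (hex j)).
    pose Rk : forall q : I * J, ('I_m.+1 -> A q.1 q.2) -> Prop := fun q => Rkj q.2 q.1.
    exists (prod_rel Rk); split; first by exists Rk.
    apply/(compat2 Rk); by apply: (uf_mono hG h) => j /hb.
- have compat2 : forall Rk : forall q : I * J, ('I_m.+1 -> A q.1 q.2) -> Prop,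
      hsat (decomposable (prod_uf F G) (fun q : I * J => A q.1 q.2)) s (upd2 S X (prod_rel Rk)) p <->
      G (fun j => hsat (decomposable F (A^~ j)) (sj j) (upd2 (Sj j) X (prod_rel (fun i => Rk (i, j)))) p).
    move=> Rk; apply: (IHp sg (@rupd _ _ _ rh m X Rk)) => //.
    - move=> m' X'; exact: upd2_prod.
    - move=> j m' X'.
      by rewrite (@upd2_prod _ _ _ _ (Sj j) (fun m X i => rh m X (i, j)) m X (fun i => Rk (i, j)) (hSj j)) rupd_restr.
  split.
  + move=> h; apply: NNPP => hn; move/(uf_not hG): hn => hn.
    have hex : forall j, exists Rkj : forall i, ('I_m.+1 -> A i j) -> Prop,
        (~ forall R, decomposable F (A^~ j) m R -> hsat (decomposable F (A^~ j)) (sj j) (upd2 (Sj j) X R) p) ->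
        ~ hsat (decomposable F (A^~ j)) (sj j) (upd2 (Sj j) X (prod_rel Rkj)) p.
      move=> j; case: (classic (forall R, decomposable F (A^~ j) m R -> hsat (decomposable F (A^~ j)) (sj j) (upd2 (Sj j) X R) p)) => [hall|hn'].
      * by exists (fun _ _ => True).
      * have [R hR0] := not_all_ex_not _ _ hn'.
        have [[Rk0 e] hR] := imply_to_and _ _ hR0.
        by subst R; exists Rk0.
    pose Rkj := fun j => proj1_sig (constructive_indefinite_description _ (hex j)).
    have hb := fun j => proj2_sig (constructive_indefinite_description _ (hex j)).
    pose Rk : forall q : I * J, ('I_m.+1 -> A q.1 q.2) -> Prop := fun q => Rkj q.2 q.1.
    have h2 := proj1 (compat2 Rk) (h (prod_rel Rk) (ex_intro _ Rk erefl)).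
    have := proj2 (uf_and hG _ _) (conj h2 hn).
    by apply: (uf_false hG) => j [h3 h4]; apply: (hb j h4).
  + move=> h R [Rk ->]; apply/(compat2 Rk); apply: (uf_mono hG h) => j hj; apply: hj.
    by exists (fun i => Rk (i, j)).
Qed.

Unset Implicit Arguments.
Set Strict Implicit.

Theorem lemma2p16 (tau : signature) (I J : Type)
  (F : (I -> Prop) -> Prop) (G : (J -> Prop) -> Prop)
  (hF : ultrafilter F) (hG : ultrafilter G)
  (A : I -> J -> structure tau) (phi : formula tau) :
  G (fun j => dh_models F (fun i => A i j) phi)
  <-> dh_models (prod_uf F G) (fun p : I * J => A p.1 p.2) phi.
Proof.
rewrite /dh_models /hmodels; split.
- move=> h s S hS.
  pose rh := fun m X => proj1_sig (constructive_indefinite_description _ (hS m X)).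
  have hrh : forall m X, S m X = prod_rel (rh m X) :=
    fun m X => proj2_sig (constructive_indefinite_description _ (hS m X)).
  pose sg := fun x => urep (s x).
  apply/(los hF hG phi (sg := sg) (rh := rh)
          (sj := fun j x => uinj F (fun i => sg x (i, j)))
          (Sj := fun j m X => prod_rel (fun i => rh m X (i, j)))) => //.
  + by move=> x; rewrite /sg uinj_urep.
  + apply: (uf_mono hG h) => j hj; apply: hj => m X.
    by exists (fun i => rh m X (i, j)).
- move=> h; apply: NNPP => hn; move/(uf_not hG): hn => hn.
  have hex : forall j, exists sS : fo_asg (ultraproduct F (A^~ j)) * so_asg (ultraproduct F (A^~ j)),
      (forall m X, decomposable F (A^~ j) m (sS.2 m X)) /\
      (~ (forall s S, (forall m X, decomposable F (A^~ j) m (S m X)) ->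
            hsat (decomposable F (A^~ j)) s S phi) ->
       ~ hsat (decomposable F (A^~ j)) sS.1 sS.2 phi).
    move=> j; case: (classic (forall s S, (forall m X, decomposable F (A^~ j) m (S m X)) ->
            hsat (decomposable F (A^~ j)) s S phi)) => [hall|hn'].
    + exists ((fun _ => epsilon (dom_ne (ultraproduct F (A^~ j))) (fun _ => True)),
              (fun m X => prod_rel (fun _ _ => True))); split => // m X.
      by exists (fun _ _ => True).
    + have [s0 hs0] := not_all_ex_not _ _ hn'.
      have [S0 hS0] := not_all_ex_not _ _ hs0.
      have [hd hns] := imply_to_and _ _ hS0.
      by exists (s0, S0).
  pose sS := fun j => proj1_sig (constructive_indefinite_description _ (hex j)).
  have hsS := fun j => proj2_sig (constructive_indefinite_description _ (hex j)).
  pose Rkj := fun j m X => proj1_sig (constructive_indefinite_description _ ((hsS j).1 m X)).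
  have hRkj : forall j m X, (sS j).2 m X = prod_rel (Rkj j m X) :=
    fun j m X => proj2_sig (constructive_indefinite_description _ ((hsS j).1 m X)).
  pose sg : nat -> forall q : I * J, A q.1 q.2 := fun x q => urep ((sS q.2).1 x) q.1.
  pose rh : forall m, nat -> forall q : I * J, ('I_m.+1 -> A q.1 q.2) -> Prop :=
    fun m X q => Rkj q.2 m X q.1.
  have hsat0 := h (fun x => uinj (prod_uf F G) (sg x)) (fun m X => prod_rel (rh m X))
    (fun m X => ex_intro _ (rh m X) erefl).
  have hl := los hF hG phi (sg := sg) (rh := rh) (sj := fun j => (sS j).1) (Sj := fun j => (sS j).2)
     (fun x => erefl) (fun m X => erefl).
  have h3 : forall j x, (sS j).1 x = uinj F (fun i => sg x (i, j)).
    by move=> j x; rewrite /sg /= uinj_urep.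
  have h4 : forall j m X, (sS j).2 m X = prod_rel (fun i => rh m X (i, j)).
    by move=> j m X; rewrite hRkj.
  have h2 := proj1 (hl h3 h4) hsat0.
  have := proj2 (uf_and hG _ _) (conj h2 hn).
  by apply: (uf_false hG) => j [h5 h6]; apply: ((hsS j).2 h6).
Qed.
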